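(* Let $\varphi=\frac{1+\sqrt5}{2}$ be the golden ratio and let $(F_n)_{n\ge1}$ be the Fibonacci numbers with $F_1=F_2=1$ and $F_{n+1}=F_n+F_{n-1}$. For $n\in\mathbb{N}_{>0}$ let $\sigma_{F_n}\in S_{F_n}$ be the Kronecker permutation associated with $(\{k\varphi\})_{k=1}^{F_n}$, i.e. the unique permutation of $\{1,\dots,F_n\}$ with $\{\sigma_{F_n}(1)\varphi\}<\{\sigma_{F_n}(2)\varphi\}<\dots<\{\sigma_{F_n}(F_n)\varphi\}$. Then: (1) If $n$ is even, the cycle decomposition of $\sigma_{F_n}$ consists only of 2-cycles and fixed points. (2) If $n\equiv 1$ or $n\equiv 5 \pmod 6$, the cycle decomposition of $\sigma_{F_n}$ consists of cycles of length 4 and exactly one fixed point. (3) If $n\equiv 3 \pmod 6$, the cycle decomposition of $\sigma_{F_n}$ consists of cycles of length 4 and exactly one cycle of length 2.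
   Context: For real $x$, $\{x\}=x-\lfloor x\rfloor$ denotes the fractional part. For an irrational $\alpha>0$ and $N\in\mathbb{N}$, the $N$ numbers $\{k\alpha\}$, $1\le k\le N$, are distinct, and the Kronecker permutation $\sigma_N\in S_N$ is defined by ordering them increasingly: $\{\sigma_N(1)\alpha\}<\dots<\{\sigma_N(N)\alpha\}$. Cycle lengths refer to the disjoint cycle decomposition of the permutation (a fixed point is a cycle of length 1). *)

(* Defs.v *)
From HB Require Import structures.
From mathcomp Require Import all_boot all_order all_algebra all_fingroup.
From mathcomp Require Import reals.
Set Implicit Arguments. Unset Strict Implicit. Unset Printing Implicit Defensive.
Import Order.TTheory GRing.Theory Num.Theory.
Local Open Scope ring_scope.

Fixpoint fib (n : nat) : nat :=
  match n with
  | 0 => 0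
  | 1 => 1
  | (m.+1 as k).+1 => fib k + fib m
  end%N.

Definition frac (R : realType) (x : R) : R := x - (Num.floor x)%:~R.

Definition golden (R : realType) : R := (1 + Num.sqrt 5) / 2.

(* s : {perm 'I_N} encodes a permutation of {1,..,N} via k <-> k-1.
   It is the Kronecker permutation for alpha iff
   {s(1) alpha} < {s(2) alpha} < ... < {s(N) alpha}. *)
Definition is_kronecker_perm (R : realType) (alpha : R) (N : nat)
  (s : {perm 'I_N}) : Prop :=
  forall i j : 'I_N, (i < j)%N ->
    frac ((s i).+1%:R * alpha) < frac ((s j).+1%:R * alpha).

(* Main.v *)
Require Import Defs.
From HB Require Import structures.
From mathcomp Require Import all_boot all_order all_algebra all_fingroup.
From mathcomp Require Import reals.
From mathcomp Require Import ring lra zify.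
Import Order.TTheory GRing.Theory Num.Theory.
Set Implicit Arguments. Unset Strict Implicit.
Definition rf (N a c i : nat) : nat := ((a * i + c) %% N)%N.

Lemma rf_lt N a c i : 0 < N -> rf N a c i < N.
Proof. by move=> h; rewrite /rf ltn_pmod. Qed.

Lemma rf2 N a c i : rf N a c (rf N a c i) = (a * (a * i + c) + c) %% N.
Proof. by rewrite /rf -modnDml modnMmr modnDml. Qed.

Lemma cassini m : (fib m.+1 * fib m.+1 + odd m = fib m.+2 * fib m + ~~ odd m)%N.
Proof.
elim: m => [//|m IH].
have e2 : fib m.+3 = (fib m.+2 + fib m.+1)%N by [].
have e1 : fib m.+2 = (fib m.+1 + fib m)%N by [].
rewrite e2 e1 -[odd m.+1]/(~~ odd m); rewrite e1 in IH.
case: (odd m) IH => /= IH; nia.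
Qed.

Lemma fib_odd n : odd (fib n) = (n %% 3 != 0).
Proof.
suff: odd (fib n) = (n %% 3 != 0) /\ odd (fib n.+1) = (n.+1 %% 3 != 0) by case.
elim: n => [//|m [IH1 IH2]]; split => //.
have -> : fib m.+2 = (fib m.+1 + fib m)%N by [].
rewrite oddD IH1 IH2.
have : m %% 3 = 0 \/ m %% 3 = 1 \/ m %% 3 = 2 by lia.
case=> [h|[h|h]].
- have e1 : m.+1 %% 3 = 1 by lia.
  have e2 : m.+2 %% 3 = 2 by lia.
  by rewrite h e1 e2.
- have e1 : m.+1 %% 3 = 2 by lia.
  have e2 : m.+2 %% 3 = 0 by lia.
  by rewrite h e1 e2.
- have e1 : m.+1 %% 3 = 0 by lia.
  have e2 : m.+2 %% 3 = 1 by lia.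
  by rewrite h e1 e2.
Qed.

Lemma fib_pos n : 0 < n -> 0 < fib n.
Proof.
case: n => // m _; elim: m => [//|m IH].
have -> : fib m.+2 = (fib m.+1 + fib m)%N by []. lia.
Qed.

Lemma fib_le n : fib n.-1 <= fib n.
Proof.
case: n => // [[//|m]].
have -> : fib m.+2 = (fib m.+1 + fib m)%N by []. simpl predn. lia.
Qed.

Lemma rf_even N a F i : 0 < N -> a * a = N * F + 1 -> i < N ->
  rf N a (a + N - 1) (rf N a (a + N - 1) i) = i.
Proof.
move=> hN ha hi; rewrite rf2.
rewrite (_ : a * (a * i + (a + N - 1)) + (a + N - 1) = (F * i + F + a + 1) * N + i).
  by rewrite modnMDl modn_small.
nia.
Qed.

Lemma rf_key N a F i : 0 < N -> a * a + 1 = N * F ->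
  (rf N a a (rf N a a i) + i.+1) %% N = a %% N.
Proof.
move=> hN ha; rewrite rf2 modnDml.
rewrite (_ : a * (a * i + a) + a + i.+1 = (F * i.+1) * N + a) ?modnMDl //.
nia.
Qed.

Lemma rf_four N a F i : 0 < N -> a * a + 1 = N * F -> i < N ->
  rf N a a (rf N a a (rf N a a (rf N a a i))) = i.
Proof.
move=> hN ha hi.
set y := rf N a a (rf N a a i).
have k1 := rf_key i hN ha; have k2 := rf_key y hN ha.
rewrite -/y in k1.
have : (rf N a a (rf N a a y) + y.+1 == i + y.+1 %[mod N]).
  by rewrite k2 -k1 !addnS (addnC y i).
rewrite eqn_modDr !modn_small //; first by move/eqP.
by apply: rf_lt.
Qed.

Lemma rf_fix2 N a F i : 0 < N -> a * a + 1 = N * F -> i < N ->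
  (rf N a a (rf N a a i) == i) = ((2 * i + 1) %% N == a %% N).
Proof.
move=> hN ha hi; have k1 := rf_key i hN ha.
rewrite -k1 (_ : 2 * i + 1 = i + i.+1); last by rewrite mul2n -addnn addn1 addnS.
rewrite eqn_modDr (modn_small hi) modn_small; first by rewrite eq_sym.
exact: rf_lt.
Qed.

Lemma uniq_odd N i j : odd N -> i < N -> j < N ->
  (2 * i + 1) %% N = (2 * j + 1) %% N -> i = j.
Proof.
move=> hN.
wlog hij : i j / j <= i.
  move=> W hi hj e; case: (leqP j i) => h; first exact: W.
  by symmetry; apply: W => //; apply: ltnW.
move=> hi hj /eqP; rewrite eqn_modDr eqn_mod_dvd ?leq_mul2l ?hij ?orbT //.
rewrite -mulnBr Gauss_dvdr ?coprimen2 // => hd.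
have : i - j = 0.
  apply/eqP; apply: contraT; rewrite -lt0n => hp.
  have := dvdn_leq hp hd; lia.
lia.
Qed.

Lemma uniq_even N i j : ~~ odd N -> i < N -> j < N ->
  (2 * i + 1) %% N = (2 * j + 1) %% N -> i = j \/ i = j + N./2 \/ j = i + N./2.
Proof.
move=> hN.
have hN2 : N = 2 * N./2 by have := odd_double_half N; rewrite (negbTE hN) add0n -mul2n.
wlog hij : i j / j <= i.
  move=> W hi hj e; case: (leqP j i) => h; first exact: W.
  have := W j i (ltnW h) hj hi (esym e); lia.
move=> hi hj /eqP; rewrite eqn_modDr eqn_mod_dvd ?leq_mul2l ?hij ?orbT //.
rewrite -mulnBr {1}hN2 dvdn_pmul2l // => /dvdnP [t ht].
have : t = 0 \/ t = 1 by nia.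
case=> e; rewrite e in ht; lia.
Qed.
Lemma odd_fix N a F : odd N -> 0 < N -> a <= N -> a * a + 1 = N * F ->
  exists2 i0, i0 < N & (rf N a a i0 = i0 /\
     forall i, i < N -> rf N a a (rf N a a i) = i -> i = i0).
Proof.
move=> hN hN0 haN ha.
have [i0 hi0 e0] : exists2 i0, i0 < N & (2 * i0 + 1) %% N = a %% N.
  clear ha.
  have hd := odd_double_half a; rewrite -muln2 in hd.
  have hd' := odd_double_half (a + N); rewrite -muln2 in hd'.
  case hoa: (odd a) hd => hd.
    by exists a./2; [lia | congr (_ %% _); lia].
  rewrite oddD hoa hN /= in hd'.
  exists (a + N)./2; first by lia.
  by rewrite (_ : 2 * (a + N)./2 + 1 = a + N) ?modnDr //; lia.
have uq : forall i, i < N -> rf N a a (rf N a a i) = i -> i = i0.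
  move=> i hi /eqP; rewrite (rf_fix2 hN0 ha hi) -e0 => /eqP e.
  exact: uniq_odd e.
exists i0 => //; split => //.
apply: uq; first exact: rf_lt.
by congr (rf N a a); apply/eqP; rewrite (rf_fix2 hN0 ha hi0) e0.
Qed.

Lemma even_fix N a F : ~~ odd N -> 0 < N -> a <= N -> a * a + 1 = N * F ->
  (forall i, i < N -> rf N a a i != i) /\
  exists2 i1, i1 < N & [/\ rf N a a (rf N a a i1) = i1, rf N a a i1 != i1 &
     forall i, i < N -> rf N a a (rf N a a i) = i -> i = i1 \/ i = rf N a a i1].
Proof.
move=> hN hN0 haN ha.
have hoa : odd a.
  have := congr1 odd ha; rewrite oddD !oddM (negbTE hN) /=.
  by case: (odd a).
have nf : forall i, i < N -> rf N a a i != i.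
  move=> i hi; apply/eqP => e.
  have := congr1 odd e; rewrite /rf odd_mod ?(negbTE hN) // oddD oddM hoa /=.
  by case: (odd i).
split => //.
have hd := odd_double_half a; rewrite -muln2 hoa in hd.
have hhh := ha; move: ha => _.
set i1 := a./2 in hd.
have hi1 : i1 < N by clear hhh; lia.
have f2 : rf N a a (rf N a a i1) = i1.
  apply/eqP; rewrite (rf_fix2 hN0 hhh hi1) (_ : 2 * i1 + 1 = a) //; clear hhh; lia.
exists i1 => //; split => //; first exact: nf.
move=> i hi e.
have hfi1 : rf N a a i1 < N by apply: rf_lt.
have e3 : rf N a a (rf N a a (rf N a a i1)) = rf N a a i1 by rewrite f2.
move: e e3 => /eqP e /eqP e3.
rewrite (rf_fix2 hN0 hhh hi) in e; rewrite (rf_fix2 hN0 hhh hfi1) in e3.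
have ea : a %% N = (2 * i1 + 1) %% N by congr (_ %% _); clear hhh; lia.
rewrite ea in e e3; move/eqP: e => e; move/eqP: e3 => e3.
have h1 := uniq_even hN hi hi1 e.
have h2 := uniq_even hN hfi1 hi1 e3.
have := nf i1 hi1; move/eqP => h3.
have hN2 : N = 2 * N./2 by have := odd_double_half N; rewrite (negbTE hN) add0n -mul2n.
clear hhh e e3 ea nf; lia.
Qed.

Lemma incr_id N (g : 'I_N -> nat) : (forall i, g i < N) ->
  (forall i j : 'I_N, i < j -> g i < g j) -> forall i, g i = i.
Proof.
move=> hb hm.
have lo : forall m (H : m < N), m <= g (Ordinal H).
  elim=> [//|m IH] H.
  have H' : m < N by apply: ltnW.
  have h1 := hm (Ordinal H') (Ordinal H) (ltnSn m); have h2 := IH H'.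
  exact: leq_ltn_trans h2 h1.
have up : forall d m (H : m < N), m + d = N.-1 -> g (Ordinal H) <= m.
  elim=> [|d IH] m H e.
    have := hb (Ordinal H); move: (g _) => y hy; lia.
  have H' : m.+1 < N by lia.
  have h1 := hm (Ordinal H) (Ordinal H') (ltnSn m).
  have h2 := IH m.+1 H' ltac:(lia).
  move: h1 h2; move: (g (Ordinal H)) (g (Ordinal H')) => y z; lia.
move=> [i H] /=; have h1 := lo i H; have h2 := up (N.-1 - i) i H ltac:(lia).
move: h1 h2; move: (g _) => y; lia.
Qed.

Lemma card_char (T : finType) (u : {perm T}) x m : 0 < m -> iter m u x = x ->
  (forall i, 0 < i < m -> iter i u x != x) -> #|porbit u x| = m.
Proof.
move=> hm e ne.
set p := #|porbit u x|.
have hp : 0 < p by rewrite lt0n card_porbit_neq0.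
have U := uniq_traject_porbit u x.
have ne2 : forall i, 0 < i < p -> iter i u x != x.
  move=> i /andP[i0 ip].
  have := @nth_uniq _ x (traject u x p) i 0 ltac:(by rewrite size_traject) ltac:(by rewrite size_traject) U.
  rewrite (nth_traject u ip) (nth_traject u hp) /= => ->.
  by rewrite -lt0n.
have ep : iter p u x = x by exact: iter_porbit.
apply/eqP; rewrite eqn_leq; apply/andP; split.
  rewrite leqNgt; apply/negP => h.
  by have := ne2 m; rewrite hm h e eqxx => /(_ isT).
rewrite leqNgt; apply/negP => h.
by have := ne p; rewrite hp h ep eqxx => /(_ isT).
Qed.

Lemma card_cases (T : finType) (u : {perm T}) x : iter 4 u x = x ->
  #|porbit u x| = if u x == x then 1 else if iter 2 u x == x then 2 else 4.
Proof.
move=> e4.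
case: ifP => [/eqP e1|/negbT n1].
  apply: (@card_char _ u x 1) => // -[|i] //=; by rewrite ltnS leqn0 andbN.
case: ifP => [/eqP e2|/negbT n2].
  apply: (@card_char _ u x 2) => // -[|[|i]] //= _; by rewrite ltnS leqn0 andbN.
apply: (@card_char _ u x 4) => // -[|[|[|[|i]]]] //= _; try by rewrite ltnS leqn0 andbN.
apply: contra n1 => /eqP e3.
by rewrite -[X in _ == X]e4 /= e3.
Qed.
Lemma cass_odd n : odd n -> exists F, fib n.-1 * fib n.-1 + 1 = fib n * F.
Proof.
case: n => [//|[|m]] ho; first by exists 1.
have := cassini m; have ho2 : odd m.+2 = odd m by rewrite /= negbK.
rewrite ho2 in ho; rewrite ho /= => h.
by exists (fib m); rewrite h addn0.
Qed.

Lemma cass_even n : 0 < n -> ~~ odd n -> exists F, fib n.-1 * fib n.-1 = fib n * F + 1.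
Proof.
case: n => [//|[|m]] // _ ho.
have := cassini m; have ho2 : odd m.+2 = odd m by rewrite /= negbK.
rewrite ho2 in ho; rewrite (negbTE ho) /= => h.
by exists (fib m); rewrite -h addn0.
Qed.

Section RealPart.
Local Open Scope ring_scope.


Lemma golden_sq (R : realType) : golden R ^+ 2 = golden R + 1.
Proof.
rewrite /golden; have h := @sqr_sqrtr R 5 (ler0n _ 5).
set s := Num.sqrt 5 in h *.
have -> : ((1 + s) / 2) ^+ 2 = (1 + 2 * s + s ^+ 2) / 4 by field; done.
by rewrite h; field.
Qed.

Lemma golden_bnd (R : realType) : 1 < golden R < 2.
Proof.
rewrite /golden; have h := @sqr_sqrtr R 5 (ler0n _ 5).
have h0 := @sqrtr_ge0 R 5.
set s := Num.sqrt 5 in h h0 *.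
have : 2 < s < 3.
  apply/andP; split; nra.
move=> /andP [h1 h2]; apply/andP; split; lra.
Qed.

Lemma fib_e (R : realType) (m : nat) :
  (fib m.+1)%:R - golden R * (fib m)%:R = (1 - golden R) ^+ m.
Proof.
have hs := golden_sq R.
suff: ((fib m.+1)%:R - golden R * (fib m)%:R = (1 - golden R) ^+ m) /\
      ((fib m.+2)%:R - golden R * (fib m.+1)%:R = (1 - golden R) ^+ m.+1 :> R) by case.
elim: m => [|m [IH1 IH2]].
  by split; rewrite /= ?expr0 ?expr1 /=; lra.
split => //.
have -> : fib m.+3 = (fib m.+2 + fib m.+1)%N by [].
have -> : fib m.+2 = (fib m.+1 + fib m)%N by [].
rewrite !natrD.
have -> : (1 - golden R) ^+ m.+2 = (1 - golden R) ^+ m.+1 + (1 - golden R) ^+ m.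
  rewrite !exprS; set p := (1 - golden R) ^+ m. 
  have : (1 - golden R) * (1 - golden R) = (1 - golden R) + 1.
    have hs' : golden R * golden R = golden R + 1 by rewrite -expr2.
    rewrite (_ : (1 - golden R) * (1 - golden R) = 1 - 2 * golden R + golden R * golden R); last by ring.
    rewrite hs'; ring.
  move=> h; rewrite mulrA h; ring.
move: IH1 IH2; rewrite -!/(fib _).
have -> : fib m.+2 = (fib m.+1 + fib m)%N by [].
rewrite natrD => IH1 IH2; lra.
Qed.

Lemma fib_t (R : realType) (m : nat) :
  (fib m.+1)%:R * (golden R - 1) ^+ m <= 1 :> R.
Proof.
have hs := golden_sq R; have /andP[hb1 hb2] := golden_bnd R.
set t := golden R - 1.
have hs' : golden R * golden R = golden R + 1 by rewrite -expr2.
have ht2 : t * t = 1 - t.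
  rewrite /t (_ : (golden R - 1) * (golden R - 1) = golden R * golden R - 2 * golden R + 1); last by ring.
  rewrite hs'; ring.
have ht0 : 0 <= t by rewrite /t; lra.
have ht1 : t <= 1 by rewrite /t; lra.
suff: ((fib m.+1)%:R * t ^+ m <= 1) /\ ((fib m.+2)%:R * t ^+ m.+1 <= 1 :> R) by case.
elim: m => [|m [IH1 IH2]].
  by split; rewrite /= ?expr0 ?expr1 /=; lra.
split => //.
have -> : fib m.+3 = (fib m.+2 + fib m.+1)%N by [].
rewrite natrD !exprS.
have e1 : t ^+ m = t ^+ m by [].
have hp : 0 <= t ^+ m by exact: exprn_ge0.
rewrite exprS in IH2.
set p := t ^+ m in hp IH1 IH2 *.
set A := (fib m.+1)%:R in IH1 IH2 *.
set B := (fib m.+2)%:R in IH2 *.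
have -> : (B + A) * (t * (t * p)) = t * (B * (t * p)) + (t * t) * (A * p) by ring.
rewrite ht2.
have h1 : t * (B * (t * p)) <= t by rewrite -[X in _ <= X]mulr1; apply: ler_wpM2l.
have h2 : (1 - t) * (A * p) <= 1 - t by rewrite -[X in _ <= X]mulr1; apply: ler_wpM2l => //; lra.
lra.
Qed.

Lemma natzR (R : realType) (k : nat) : (k%:Z)%:~R = k%:R :> R.
Proof. by []. Qed.
Lemma frac_nat (R : realType) (m : nat) (y : R) : 0 <= y < 1 -> Defs.frac (m%:R + y) = y.
Proof.
move=> /andP[h0 h1]; rewrite /Defs.frac (@floor_def _ _ m%:Z).
  by rewrite natzR; lra.
by rewrite -(PoszD m 1) !natzR natrD; lra.
Qed.

Lemma divN_bnd (R : realType) (N : nat) (x y z : R) : 0 < N%:R :> R ->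
  x <= y -> y < z -> x / N%:R <= y / N%:R < z / N%:R.
Proof.
move=> hN h1 h2; have hNi : 0 < N%:R^-1 :> R by rewrite invr_gt0.
by rewrite ler_pM2r // ltr_pM2r // h1 h2.
Qed.

Lemma div_unit (R : realType) (N : nat) (y : R) : 0 < N%:R :> R ->
  0 <= y -> y < N%:R -> 0 <= y / N%:R < 1.
Proof.
move=> hN h1 h2; rewrite divr_ge0 ?(ltW hN) //= ltr_pdivrMr // mul1r //.
Qed.


Lemma frac_bounds (R : realType) (n i N a c : nat) : (0 < n)%N -> (i < fib n)%N ->
  N = fib n -> a = fib n.-1 ->
  c = (if odd n then a else (a + N - 1)%N) ->
  (rf N a c i)%:R / N%:R <= Defs.frac (i.+1%:R * golden R) < (rf N a c i).+1%:R / N%:R.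
Proof.
case: n => [//|n'] _ hi; move: N a c => _ _ _ -> -> ->.
set N := fib n'.+1; set a := fib n'.
have /andP[hg1 hg2] := golden_bnd R.
set g := golden R in hg1 hg2 *.
have hN0 : (0 < N)%N by lia.
have hN : 0 < N%:R :> R by rewrite ltr0n.
have hNi : 0 < N%:R^-1 :> R by rewrite invr_gt0.
have He := fib_e R n'.+1.
have hF : fib n'.+2 = (N + a)%N by [].
rewrite hF -/g -/N in He.
set T := (g - 1) ^+ n'.+1.
have hE : (1 - g) ^+ n'.+1 = (-1) ^+ (odd n'.+1) * T.
  by rewrite signr_odd /T -exprMn; congr (_ ^+ _); ring.
rewrite hE in He.
have hT0 : 0 < T by rewrite /T exprn_gt0 // subr_gt0.
have hNT : N%:R * T < 1.
  have := fib_t R n'; rewrite -/N -/g => h.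
  rewrite /T exprS mulrCA.
  have hp : 0 <= N%:R * (g - 1) ^+ n' :> R by rewrite mulr_ge0 // exprn_ge0 // subr_ge0 ltW.
  rewrite mulrC. 
  apply: (@le_lt_trans _ _ (1 * (g - 1))).
    by apply: ler_wpM2r => //; rewrite subr_ge0 ltW.
  lra.
set k := i.+1.
have hk : (k <= N)%N by [].
have hkT : 0 < k%:R * T < 1.
  apply/andP; split; first by rewrite mulr_gt0 // ltr0n.
  apply: le_lt_trans hNT; apply: ler_wpM2r; [exact: ltW | by rewrite ler_nat].
move: hkT => /andP[hkT0 hkT1].
set q := ((k * a) %/ N)%N; set j := ((k * a) %% N)%N.
have hdiv : (k * a = q * N + j)%N by rewrite /q /j -divn_eq.
have hj : (j < N)%N by rewrite /j ltn_pmod.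
set E := (-1) ^+ odd n'.+1 * T in He.
have hg : g = (N%:R + a%:R - E) / N%:R.
  apply: (@mulIf _ N%:R); first by rewrite pnatr_eq0 -lt0n.
  rewrite mulfVK ?pnatr_eq0 -?lt0n //; lra.
have hjR : j%:R = k%:R * a%:R - q%:R * N%:R :> R.
  by rewrite -natrM hdiv natrD natrM; ring.
have hkg : k%:R * g = (i + q).+1%:R + (j%:R - k%:R * E) / N%:R.
  rewrite hjR hg -addn1 !natrD (_ : k%:R = i%:R + 1); last by rewrite natr1.
  by field; rewrite pnatr_eq0 -lt0n.
rewrite hkg.
have hka : (a * i + a = q * N + j)%N by rewrite -hdiv /k mulSn addnC mulnC.
have hjN : j%:R + 1 <= N%:R :> R by rewrite natr1 ler_nat.
have hj0R : 0 <= j%:R :> R := ler0n _ _.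
rewrite /E; case ho: (odd n'.+1).
  rewrite expr1 mulN1r.
  have -> : rf N a a i = j by rewrite /rf hka modnMDl modn_small.
  have hy : j%:R - k%:R * - T = j%:R + k%:R * T by ring.
  rewrite hy frac_nat; last by apply: div_unit => //; lra.
  by apply: divN_bnd => //; [lra | rewrite -[j.+1%:R]natr1; lra].
rewrite expr0 mul1r.
case: (posnP j) => hj0.
  have -> : rf N a (a + N - 1) i = N.-1.
    rewrite /rf (_ : (a * i + (a + N - 1) = q * N + N.-1)%N); last by lia.
    by rewrite modnMDl modn_small // prednK.
  have hN1 : N.-1%:R + 1 = N%:R :> R by rewrite natr1 prednK.
  rewrite hj0 -[(i + q).+1%:R]natr1 -addrA frac_nat; last first.
    have -> : 1 + (0%:R - k%:R * T) / N%:R = (N%:R - k%:R * T) / N%:R by field; rewrite pnatr_eq0 -lt0n.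
    by apply: div_unit => //; lra.
  have -> : 1 + (0%:R - k%:R * T) / N%:R = (N%:R - k%:R * T) / N%:R by field; rewrite pnatr_eq0 -lt0n.
  by rewrite prednK //; apply: divN_bnd => //; lra.
have -> : rf N a (a + N - 1) i = j.-1.
  rewrite /rf (_ : (a * i + (a + N - 1) = 1 * N + q * N + j.-1)%N); last by lia.
  by rewrite -addnA modnMDl modnMDl modn_small // (leq_ltn_trans (leq_pred _)).
have hj1 : j.-1%:R + 1 = j%:R :> R by rewrite natr1 prednK.
have hj1' : 1 <= j%:R :> R by rewrite ler1n.
rewrite frac_nat; last by apply: div_unit => //; lra.
by rewrite prednK //; apply: divN_bnd => //; lra.
Qed.

Lemma order_lemma (R : realType) (n x y N a c : nat) : (0 < n)%N ->
  (x < fib n)%N -> (y < fib n)%N -> N = fib n -> a = fib n.-1 ->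
  c = (if odd n then a else (a + N - 1)%N) ->
  Defs.frac (x.+1%:R * golden R) < Defs.frac (y.+1%:R * golden R) ->
  (rf N a c y < rf N a c x)%N -> False.
Proof.
move=> hn hx hy eN ea ec h hr.
have /andP[hx1 hx2] := @frac_bounds R n x N a c hn hx eN ea ec.
have /andP[hy1 hy2] := @frac_bounds R n y N a c hn hy eN ea ec.
have hN : 0 < N%:R :> R by rewrite eN ltr0n; apply: fib_pos.
have hNi : 0 < N%:R^-1 :> R by rewrite invr_gt0.
have : (rf N a c y).+1%:R / N%:R <= (rf N a c x)%:R / N%:R :> R.
  by rewrite ler_pM2r // ler_nat.
lra.
Qed.
End RealPart.

Theorem theorem1 (R : realType) (n : nat) (s : {perm 'I_(fib n)}) :
  (0 < n)%N ->
  is_kronecker_perm (golden R) s ->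
  [/\ (~~ odd n -> forall C, C \in porbits s -> #|C| \in [:: 1; 2]%N),
      ((n %% 6 == 1) || (n %% 6 == 5) ->
         (forall C, C \in porbits s -> #|C| \in [:: 1; 4]%N) /\
         #|[set C in porbits s | #|C| == 1%N]| = 1%N)
    & (n %% 6 == 3 ->
         (forall C, C \in porbits s -> #|C| \in [:: 2; 4]%N) /\
         #|[set C in porbits s | #|C| == 2%N]| = 1%N)].
Proof.
move=> hn hK.
have hN0 : 0 < fib n := fib_pos hn.
have haN : fib n.-1 <= fib n := fib_le n.
pose N := fib n. pose a := fib n.-1.
pose c := if odd n then a else (a + N - 1)%N.
pose f := rf N a c.
have hfl : forall i, f i < N by move=> i; apply: rf_lt.
have hf4 : forall i, i < N -> f (f (f (f i))) = i.
  move=> i hi; rewrite /f; case ho: (odd n).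
    have hc : c = a by rewrite /c ho.
    have [F hF] := cass_odd ho.
    by rewrite hc; apply: (rf_four hN0 hF hi).
  have hc : c = (a + N - 1)%N by rewrite /c ho.
  have [F hF] := cass_even hn (negbT ho).
  by rewrite hc (rf_even hN0 hF) ?(rf_even hN0 hF).
have hinj : forall x y, x < N -> y < N -> f x = f y -> x = y.
  by move=> x y hx hy e; rewrite -(hf4 x hx) -(hf4 y hy) e.
have hrs : forall x : 'I_N, f (s x) = x.
  apply: (@incr_id N (fun x => f (s x))) => [i|i j hij]; first exact: hfl.
  have h := hK i j hij.
  case: (ltngtP (f (s i)) (f (s j))) => // h'.
    by exfalso; apply: (@order_lemma R n (s i) (s j) N a c hn (ltn_ord _) (ltn_ord _) erefl erefl erefl h h').
  have : s i = s j by apply/val_inj/(hinj _ _ (ltn_ord _) (ltn_ord _) h').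
  by move/perm_inj => e; rewrite e ltnn in hij.
have hu : forall y : 'I_N, val ((s^-1)%g y) = f y.
  by move=> y; have := hrs ((s^-1)%g y); rewrite permKV => ->.
rewrite -(porbitsV s).
set u := (s^-1)%g.
have hiter : forall m (y : 'I_N), val (iter m u y) = iter m f (val y).
  by elim=> [//|m IH] y; rewrite !iterS hu IH.
have h4 : forall y, iter 4 u y = y.
  by move=> y; apply: val_inj; rewrite hiter /=; apply: hf4.
have hcard : forall y, #|porbit u y| =
    (if f y == y then 1 else if f (f y) == y then 2 else 4)%N.
  move=> y; rewrite card_cases // -val_eqE /= hu.
  by rewrite -[iter 2 u y == y]val_eqE hiter.
split.
- move=> hev C /imsetP [y _ ->]; rewrite hcard.
  have hc : c = (a + N - 1)%N by rewrite /c (negbTE hev).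
  have [F hF] := cass_even hn hev.
  have e2 : f (f y) == y by rewrite /f hc (rf_even hN0 hF) ?ltn_ord.
  by rewrite e2; case: ifP.
- move=> h6.
  have ho : odd n.
    have h2 : n %% 2 = 1 by case/orP: h6 => /eqP h; lia.
    by move: (modn2 n); rewrite h2; case: (odd n).
  have hNo : odd N by rewrite /N fib_odd; apply/eqP; case/orP: h6 => /eqP h; lia.
  have hc : c = a by rewrite /c ho.
  have [F hF] := cass_odd ho.
  have [i0 hi0 [fi0 uq]] := odd_fix hNo hN0 haN hF.
  have uq' : forall i, i < N -> f (f i) = i -> i = i0 by rewrite /f hc.
  have fi0' : f i0 = i0 by rewrite /f hc.
  have key : forall y : 'I_N, (f y == y) = (f (f y) == y).
    move=> y; apply/eqP/eqP => e; first by rewrite e e.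
    by rewrite (uq' _ (ltn_ord y) e).
  split.
    by move=> C /imsetP [y _ ->]; rewrite hcard -key; case: (f y == y).
  pose x0 : 'I_N := Ordinal hi0.
  have -> : [set C in porbits u | #|C| == 1] = [set porbit u x0].
    apply/setP => C; rewrite !inE; apply/andP/eqP.
      case=> /imsetP [y _ ->]; rewrite hcard -key.
      case: ifP => [/eqP e _|_]; last by case: ifP.
      have ey : val y = i0 by apply: uq' (ltn_ord y) _; rewrite e e.
      by congr porbit; apply: val_inj.
    move=> ->; rewrite hcard /x0 /= fi0' eqxx; split => //.
    by apply/imsetP; exists (Ordinal hi0).
  by rewrite cards1.
- move=> /eqP h6.
  have ho : odd n.
    have h2 : n %% 2 = 1 by lia.
    by move: (modn2 n); rewrite h2; case: (odd n).
  have hNe : ~~ odd N by rewrite /N fib_odd negbK; apply/eqP; lia.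
  have hc : c = a by rewrite /c ho.
  have [F hF] := cass_odd ho.
  have [nf [i1 hi1 [f2 nf1 uq]]] := even_fix hNe hN0 haN hF.
  have uq' : forall i, i < N -> f (f i) = i -> i = i1 \/ i = f i1 by rewrite /f hc.
  have nf' : forall i, i < N -> f i != i by rewrite /f hc.
  have f2' : f (f i1) = i1 by rewrite /f hc.
  have nf1' : f i1 != i1 by rewrite /f hc.
  split.
    by move=> C /imsetP [y _ ->]; rewrite hcard (negbTE (nf' _ (ltn_ord y))); case: ifP.
  pose x1 : 'I_N := Ordinal hi1.
  have -> : [set C in porbits u | #|C| == 2] = [set porbit u x1].
    apply/setP => C; rewrite !inE; apply/andP/eqP.
      case=> /imsetP [y _ ->]; rewrite hcard (negbTE (nf' _ (ltn_ord y))).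
      case: ifP => [/eqP e _|_]; last by [].
      case: (uq' _ (ltn_ord y) e) => ey.
        by congr porbit; apply: val_inj.
      have -> : y = u x1 by apply: val_inj; rewrite hu; exact: ey.
      by have := porbit_perm u 1 x1; rewrite expg1.
    move=> ->; rewrite hcard /x1 /= (negbTE nf1') f2' eqxx; split => //.
    by apply/imsetP; exists (Ordinal hi1).
  by rewrite cards1.
Qed.
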